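(* Let $A,B,C$ be logically independent events. Given $(x,y)\in[0,1]^2$, the assessment $P(C|A)=x$, $P(C|B)=y$, $P(C|(A\vee B))=z$ is coherent if and only if $z'\le z\le z''$, where \[ z'=\begin{cases}\dfrac{xy}{x+y-xy}, & (x,y)\neq(0,0),\\ 0, & (x,y)=(0,0),\end{cases}\qquad z''=\begin{cases}\dfrac{x+y-2xy}{1-xy}, & (x,y)\neq(1,1),\\ 1, & (x,y)=(1,1).\end{cases} \] Consequently, if $0\le\alpha_i\le\beta_i\le1$ ($i=1,2$) with $(\alpha_1,\alpha_2)\neq(0,0)$ and $(\beta_1,\beta_2)\neq(1,1)$, the set of values $z$ for which there exist $x\in[\alpha_1,\beta_1]$, $y\in[\alpha_2,\beta_2]$ making $(x,y,z)$ a coherent assessment on $(C|A,C|B,C|(A\vee B))$ is exactly $[\alpha_3,\beta_3]$ with \[ \alpha_3=\frac{\alpha_1\alpha_2}{\alpha_1+\alpha_2-\alpha_1\alpha_2},\qquad \beta_3=\frac{\beta_1+\beta_2-2\beta_1\beta_2}{1-\beta_1\beta_2}. \]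
   Context: Events are elements of a Boolean algebra; $AB$ denotes conjunction, $A\vee B$ disjunction, $A^c$ negation. $A,B,C$ are logically independent if all eight conjunctions $A^{*}B^{*}C^{*}$ (each $X^{*}\in\{X,X^c\}$) are possible (nonempty). A conditional event $E|H$ requires $H\neq\emptyset$; conditional probabilities are treated as primitive (no requirement that $P(H)>0$). Coherence (de Finetti): an assessment $(p_1,\dots,p_n)$ on conditional events $E_1|H_1,\dots,E_n|H_n$ is coherent if for every nonempty $J\subseteq\{1,\dots,n\}$ and every real numbers $s_j$ ($j\in J$), the random gain $G=\sum_{j\in J}s_j\,I_{H_j}(I_{E_j}-p_j)$ (with $I$ denoting indicator functions) satisfies $\max G\ge 0$, where the maximum is taken over the possible worlds (atoms) contained in $\bigvee_{j\in J}H_j$. *)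

(* Defs.v *)
From HB Require Import structures.
From mathcomp Require Import all_boot all_order all_algebra.
From mathcomp Require Import reals.
Set Implicit Arguments. Unset Strict Implicit. Unset Printing Implicit Defensive.
Import Order.TTheory GRing.Theory Num.Theory.
Local Open Scope ring_scope.

(* Events are represented as subsets (boolean predicates) of a type of
   possible worlds Omega; conjunction = predI, disjunction = predU,
   negation = predC.  (Every Boolean algebra is representable this way.) *)

Section Coh.
Variables (R : realType) (Omega : Type).

Definition ind (E : Omega -> bool) (w : Omega) : R := if E w then 1 else 0.

Definition logically_independent (A B C : Omega -> bool) : Prop :=
  forall a b c : bool, exists w : Omega, [/\ A w = a, B w = b & C w = c].

(* de Finetti coherence of p_1..p_n on E_1|H_1,...,E_n|H_n:
   for every nonempty J and real s_j (j in J), the random gain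
   G = sum_{j in J} s_j I_{H_j} (I_{E_j} - p_j) has max >= 0 over the possible
   worlds in the disjunction of the H_j (j in J).  Since G takes finitely many
   values, "max G >= 0" is "G w >= 0 for some such world w". *)
Definition coherent (n : nat) (E H : 'I_n -> Omega -> bool) (p : 'I_n -> R)
  : Prop :=
  forall J : {set 'I_n}, J != set0 ->
  forall s : 'I_n -> R,
  exists w : Omega, [exists j in J, H j w] /\
    0 <= \sum_(j in J) s j * ind (H j) w * (ind (E j) w - p j).

Definition coherent_CA_CB_CAB (A B C : Omega -> bool) (x y z : R) : Prop :=
  coherent (tnth [tuple C; C; C]) (tnth [tuple A; B; (fun w => A w || B w)])
           (tnth [tuple x; y; z]).
End Coh.

Definition zlow {R : realType} (x y : R) : R :=
  if (x == 0) && (y == 0) then 0 else x * y / (x + y - x * y).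
Definition zupp {R : realType} (x y : R) : R :=
  if (x == 1) && (y == 1) then 1 else (x + y - 2 * x * y) / (1 - x * y).

(* Main.v *)
Require Import Defs.
From HB Require Import structures.
From mathcomp Require Import all_boot all_order all_algebra.
From mathcomp Require Import reals.
From mathcomp Require Import ring lra.
Set Implicit Arguments. Unset Strict Implicit. Unset Printing Implicit Defensive.
Import Order.TTheory GRing.Theory Num.Theory.
Local Open Scope ring_scope.

Section Alg.
Variable R : realType.

Lemma contra2 (l1 l2 g1 g2 : R) : 0 <= l1 -> 0 <= l2 -> g1 < 0 -> g2 < 0 ->
  l1 * g1 + l2 * g2 = 0 -> 0 < l1 + l2 -> False.
Proof.
move=> hl1 hl2 hg1 hg2 hs ht.
have p1 : l1 * g1 <= 0 by rewrite mulr_ge0_le0 // ltW.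
have p2 : l2 * g2 <= 0 by rewrite mulr_ge0_le0 // ltW.
have /eqP : l1 * g1 = 0 by lra.
rewrite mulf_eq0 (negbTE (ltr0_neq0 hg1)) orbF => /eqP e1.
have /eqP : l2 * g2 = 0 by lra.
rewrite mulf_eq0 (negbTE (ltr0_neq0 hg2)) orbF => /eqP e2.
lra.
Qed.

Lemma zlow_cases (x y z : R) : 0 <= x <= 1 -> 0 <= y <= 1 -> zlow x y <= z ->
  (x = 0 /\ y = 0 /\ 0 <= z) \/ (0 < x + y - x * y /\ x * y <= z * (x + y - x * y)).
Proof.
move=> /andP[x0 x1] /andP[y0 y1]; rewrite /zlow; case: ifP => [/andP[/eqP-> /eqP->] | H] hz.
  by left.
right; have dp : 0 < x + y - x * y.
  case: (eqVneq x 0) H => [-> /= /negbT y0'|x0' _].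
    rewrite mul0r subr0 add0r lt_neqAle eq_sym y0' y0 //.
  have : 0 < x by rewrite lt_neqAle eq_sym x0' x0.
  nra.
by split => //; rewrite -ler_pdivrMr.
Qed.

Lemma zupp_cases (x y z : R) : 0 <= x <= 1 -> 0 <= y <= 1 -> z <= zupp x y ->
  (x = 1 /\ y = 1 /\ z <= 1) \/ (0 < 1 - x * y /\ z * (1 - x * y) <= x + y - 2 * x * y).
Proof.
move=> /andP[x0 x1] /andP[y0 y1]; rewrite /zupp; case: ifP => [/andP[/eqP-> /eqP->] | H] hz.
  by left.
right; have dp : 0 < 1 - x * y.
  case: (eqVneq x 1) H => [-> /= /negbT y0'|x0' _].
    rewrite mul1r subr_gt0 lt_neqAle y0' y1 //.
  have : x < 1 by rewrite lt_neqAle x0' x1.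
  nra.
by split => //; rewrite -ler_pdivlMr.
Qed.


Lemma contra4 (l1 l2 l3 l4 g1 g2 g3 g4 : R) : 0 <= l1 -> 0 <= l2 -> 0 <= l3 -> 0 <= l4 ->
  g1 < 0 -> g2 < 0 -> g3 < 0 -> g4 < 0 ->
  l1 * g1 + l2 * g2 + l3 * g3 + l4 * g4 = 0 -> 0 < l1 + l2 + l3 + l4 -> False.
Proof.
move=> hl1 hl2 hl3 hl4 hg1 hg2 hg3 hg4 hs ht.
have p1 : l1 * g1 <= 0 by rewrite mulr_ge0_le0 // ltW.
have p2 : l2 * g2 <= 0 by rewrite mulr_ge0_le0 // ltW.
have p3 : l3 * g3 <= 0 by rewrite mulr_ge0_le0 // ltW.
have p4 : l4 * g4 <= 0 by rewrite mulr_ge0_le0 // ltW.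
have /eqP : l1 * g1 = 0 by lra.
rewrite mulf_eq0 (negbTE (ltr0_neq0 hg1)) orbF => /eqP e1.
have /eqP : l2 * g2 = 0 by lra.
rewrite mulf_eq0 (negbTE (ltr0_neq0 hg2)) orbF => /eqP e2.
have /eqP : l3 * g3 = 0 by lra.
rewrite mulf_eq0 (negbTE (ltr0_neq0 hg3)) orbF => /eqP e3.
have /eqP : l4 * g4 = 0 by lra.
rewrite mulf_eq0 (negbTE (ltr0_neq0 hg4)) orbF => /eqP e4.
lra.
Qed.

Lemma contra6 (l1 l2 l3 l4 l5 l6 g1 g2 g3 g4 g5 g6 : R) :
  0 <= l1 -> 0 <= l2 -> 0 <= l3 -> 0 <= l4 -> 0 <= l5 -> 0 <= l6 ->
  g1 < 0 -> g2 < 0 -> g3 < 0 -> g4 < 0 -> g5 < 0 -> g6 < 0 ->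
  l1 * g1 + l2 * g2 + l3 * g3 + l4 * g4 + l5 * g5 + l6 * g6 = 0 ->
  0 < l1 + l2 + l3 + l4 + l5 + l6 -> False.
Proof.
move=> hl1 hl2 hl3 hl4 hl5 hl6 hg1 hg2 hg3 hg4 hg5 hg6 hs ht.
have p1 : l1 * g1 <= 0 by rewrite mulr_ge0_le0 // ltW.
have p2 : l2 * g2 <= 0 by rewrite mulr_ge0_le0 // ltW.
have p3 : l3 * g3 <= 0 by rewrite mulr_ge0_le0 // ltW.
have p4 : l4 * g4 <= 0 by rewrite mulr_ge0_le0 // ltW.
have p5 : l5 * g5 <= 0 by rewrite mulr_ge0_le0 // ltW.
have p6 : l6 * g6 <= 0 by rewrite mulr_ge0_le0 // ltW.
have /eqP : l1 * g1 = 0 by lra.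
rewrite mulf_eq0 (negbTE (ltr0_neq0 hg1)) orbF => /eqP e1.
have /eqP : l2 * g2 = 0 by lra.
rewrite mulf_eq0 (negbTE (ltr0_neq0 hg2)) orbF => /eqP e2.
have /eqP : l3 * g3 = 0 by lra.
rewrite mulf_eq0 (negbTE (ltr0_neq0 hg3)) orbF => /eqP e3.
have /eqP : l4 * g4 = 0 by lra.
rewrite mulf_eq0 (negbTE (ltr0_neq0 hg4)) orbF => /eqP e4.
have /eqP : l5 * g5 = 0 by lra.
rewrite mulf_eq0 (negbTE (ltr0_neq0 hg5)) orbF => /eqP e5.
have /eqP : l6 * g6 = 0 by lra.
rewrite mulf_eq0 (negbTE (ltr0_neq0 hg6)) orbF => /eqP e6.
lra.
Qed.

Definition bR (b : bool) : R := if b then 1 else 0.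
Definition gain (s0 s1 s2 x y z : R) (t0 t1 t2 a b c : bool) : R :=
 (if t0 then s0 * bR a * (bR c - x) else 0) + (if t1 then s1 * bR b * (bR c - y) else 0)
 + (if t2 then s2 * bR (a||b) * (bR c - z) else 0).

Ltac tryw G a b c :=
  let h := fresh "h" in
  case: (lerP 0 (G a b c)) => h; [by exists a, b, c; rewrite h | ].

Lemma total_pos (x y z : R) : 0 <= x <= 1 -> 0 <= y <= 1 ->
  ~ (x = 0 /\ y = 0) -> ~ (x = 1 /\ y = 1) ->
  0 < x + y - x * y -> 0 < 1 - x * y ->
  0 <= x + y - 2 * x * y - z * (1 - x * y) -> 0 <= z * (x + y - x * y) - x * y ->
  0 < (x + y - 2 * x * y - z * (1 - x * y)) * (x + y - x * y)
      + (z * (x + y - x * y) - x * y) * (1 - x * y).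
Proof.
move=> /andP[x0 x1] /andP[y0 y1] n0 n1 d0 e0 a0 b0.
set al := x + y - 2 * x * y - z * (1 - x * y) in a0 *.
set be := z * (x + y - x * y) - x * y in b0 *.
rewrite lt_neqAle; apply/andP; split; last by nra.
apply/negP => /eqP h.
have h1 : al * (x + y - x * y) = 0 by nra.
have h2 : be * (1 - x * y) = 0 by nra.
move/eqP: h1; rewrite mulf_eq0 (negbTE (lt0r_neq0 d0)) orbF => /eqP ha.
move/eqP: h2; rewrite mulf_eq0 (negbTE (lt0r_neq0 e0)) orbF => /eqP hb.
have key : (x - y) ^+ 2 + 3 * (x * y * ((1 - x) * (1 - y))) =
    al * (x + y - x * y) + be * (1 - x * y) by rewrite /al /be; ring.
rewrite ha hb !mul0r addr0 in key.
have q1 : 0 <= (x - y) ^+ 2 by rewrite sqr_ge0.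
have q2 : 0 <= x * y * ((1 - x) * (1 - y)).
  by rewrite !mulr_ge0 // subr_ge0.
have /eqP : (x - y) ^+ 2 = 0 by lra.
rewrite sqrf_eq0 subr_eq0 => /eqP exy.
have /eqP : x * y * ((1 - x) * (1 - y)) = 0 by lra.
rewrite exy !mulf_eq0 subr_eq0 => /orP[/orP[]|/orP[]] /eqP hy.
- by apply: n0; rewrite exy hy.
- by apply: n0; rewrite exy hy.
- by apply: n1; rewrite exy -hy.
- by apply: n1; rewrite exy -hy.
Qed.

Lemma zlow_ge0 (x y : R) : 0 <= x <= 1 -> 0 <= y <= 1 -> 0 <= zlow x y.
Proof.
move=> /andP[x0 x1] /andP[y0 y1]; rewrite /zlow; case: ifP => // _.
apply: divr_ge0; first exact: mulr_ge0.
nra.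
Qed.

Lemma zupp_le1 (x y : R) : 0 <= x <= 1 -> 0 <= y <= 1 -> zupp x y <= 1.
Proof.
move=> hx hy; have := zupp_cases (z := zupp x y) hx hy (lexx _).
move: hx hy => /andP[x0 x1] /andP[y0 y1].
case=> [[_ [_ //]]|[e0 h]].
rewrite -(ler_pM2r e0) mul1r; nra.
Qed.

Lemma core (x y z s0 s1 s2 : R) (t0 t1 t2 : bool) :
 0 <= x <= 1 -> 0 <= y <= 1 -> zlow x y <= z <= zupp x y -> t0 || t1 || t2 ->
 exists a b c : bool, ((t0 && a) || (t1 && b) || (t2 && (a || b))) &&
    (0 <= gain s0 s1 s2 x y z t0 t1 t2 a b c).
Proof.
move=> hx hy /andP[hzl hzu] ht.
have z0 : 0 <= z := le_trans (zlow_ge0 hx hy) hzl.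
have z1 : z <= 1 := le_trans hzu (zupp_le1 hx hy).
have Hl := zlow_cases hx hy hzl.
have Hu := zupp_cases hx hy hzu.
move: hx hy => /andP[x0 x1] /andP[y0 y1].
case: t0 t1 t2 ht => [] [] [] // _.
-
  case: Hl => [[ex [ey _]]|[d0 hl]].
    exists true, true, false; rewrite /gain /bR /= ex ey.
    case: Hu => [[ex1 _]|[_ hu]]; first by move: ex1; rewrite ex; lra.
    have -> : z = 0 by move: hu; rewrite ex ey; lra.
    lra.
  case: Hu => [[ex [ey _]]|[e0 hu]].
    exists true, true, true; rewrite /gain /bR /= ex ey.
    have -> : z = 1 by move: hl; rewrite ex ey; lra.
    lra.
  tryw (gain s0 s1 s2 x y z true true true) true true true.
  tryw (gain s0 s1 s2 x y z true true true) true true false.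
  tryw (gain s0 s1 s2 x y z true true true) true false true.
  tryw (gain s0 s1 s2 x y z true true true) true false false.
  tryw (gain s0 s1 s2 x y z true true true) false true true.
  tryw (gain s0 s1 s2 x y z true true true) false true false.
  exfalso.
  set al := x + y - 2 * x * y - z * (1 - x * y).
  set be := z * (x + y - x * y) - x * y.
  have a0 : 0 <= al by rewrite /al; lra.
  have b0 : 0 <= be by rewrite /be; lra.
  have tp : 0 < al * (x + y - x * y) + be * (1 - x * y).
    apply: total_pos => //; try (by apply/andP); try lra.
    - by case=> ex ey; move: d0; rewrite ex ey; lra.
    - by case=> ex ey; move: e0; rewrite ex ey; lra.
  rewrite /gain /bR /= in h h0 h1 h2 h3 h4.
  apply: (contra6 (l1 := al * (x * y)) (l2 := be * ((1 - x) * (1 - y)))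
     (l3 := be * (x * (1 - y))) (l4 := al * (y * (1 - x)))
     (l5 := be * (y * (1 - x))) (l6 := al * (x * (1 - y))) _ _ _ _ _ _ h h0 h1 h2 h3 h4).
  - by apply: mulr_ge0 => //; nra.
  - by apply: mulr_ge0 => //; nra.
  - by apply: mulr_ge0 => //; nra.
  - by apply: mulr_ge0 => //; nra.
  - by apply: mulr_ge0 => //; nra.
  - by apply: mulr_ge0 => //; nra.
  - rewrite /al /be; ring.
  - have -> : al * (x * y) + be * ((1 - x) * (1 - y)) + be * (x * (1 - y)) +
      al * (y * (1 - x)) + be * (y * (1 - x)) + al * (x * (1 - y)) =
      al * (x + y - x * y) + be * (1 - x * y) by ring.
    exact: tp.
-
  tryw (gain s0 s1 s2 x y z true true false) true false true.
  tryw (gain s0 s1 s2 x y z true true false) true false false.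
  tryw (gain s0 s1 s2 x y z true true false) false true true.
  tryw (gain s0 s1 s2 x y z true true false) false true false.
  rewrite /gain /bR /= in h h0 h1 h2.
  exfalso; apply: (contra4 (l1 := x) (l2 := 1 - x) (l3 := y) (l4 := 1 - y) _ _ _ _ h h0 h1 h2); first [lra | ring].
-
  tryw (gain s0 s1 s2 x y z true false true) false true true.
  tryw (gain s0 s1 s2 x y z true false true) false true false.
  rewrite /gain /bR /= in h h0.
  exfalso; apply: (contra2 (l1 := z) (l2 := 1 - z) _ _ h h0); first [lra | ring].
-
  tryw (gain s0 s1 s2 x y z true false false) true true true.
  tryw (gain s0 s1 s2 x y z true false false) true true false.
  rewrite /gain /bR /= in h h0.
  exfalso; apply: (contra2 (l1 := x) (l2 := 1 - x) _ _ h h0); first [lra | ring].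
-
  tryw (gain s0 s1 s2 x y z false true true) true false true.
  tryw (gain s0 s1 s2 x y z false true true) true false false.
  rewrite /gain /bR /= in h h0.
  exfalso; apply: (contra2 (l1 := z) (l2 := 1 - z) _ _ h h0); first [lra | ring].
-
  tryw (gain s0 s1 s2 x y z false true false) true true true.
  tryw (gain s0 s1 s2 x y z false true false) true true false.
  rewrite /gain /bR /= in h h0.
  exfalso; apply: (contra2 (l1 := y) (l2 := 1 - y) _ _ h h0); first [lra | ring].
-
  tryw (gain s0 s1 s2 x y z false false true) true true true.
  tryw (gain s0 s1 s2 x y z false false true) true true false.
  rewrite /gain /bR /= in h h0.
  exfalso; apply: (contra2 (l1 := z) (l2 := 1 - z) _ _ h h0); first [lra | ring].
Qed.

Lemma nec (x y z : R) : 0 <= x <= 1 -> 0 <= y <= 1 ->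
 (forall s0 s1 s2, exists a b c : bool,
     (a || b) && (0 <= gain s0 s1 s2 x y z true true true a b c)) ->
 zlow x y <= z <= zupp x y.
Proof.
move=> hx hy H; move: (hx) (hy) => /andP[x0 x1] /andP[y0 y1]; apply/andP; split; rewrite leNgt; apply/negP => hz.
- move: hz; rewrite /zlow; case: ifP => [_ hz | hn hz].
    have [a [b [c /andP[hab hg]]]] := H 0 0 (-1).
    by move: hab hg; case: a; case: b; case: c; rewrite /gain /bR /=; lra.
  have d0 : 0 < x + y - x * y.
    case: (zlow_cases hx hy (lexx (zlow x y))) => [[ex [ey _]]|[] //].
    by move: hn; rewrite ex ey eqxx.
  rewrite ltr_pdivlMr // in hz.
  have [a [b [c /andP[hab hg]]]] := H y x (- (x + y - x * y)).
  by move: hab hg; case: a; case: b; case: c; rewrite /gain /bR /=; nra.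
- move: hz; rewrite /zupp; case: ifP => [_ hz | hn hz].
    have [a [b [c /andP[hab hg]]]] := H 0 0 1.
    by move: hab hg; case: a; case: b; case: c; rewrite /gain /bR /=; lra.
  have e0 : 0 < 1 - x * y.
    case: (zupp_cases hx hy (lexx (zupp x y))) => [[ex [ey _]]|[] //].
    by move: hn; rewrite ex ey eqxx.
  rewrite ltr_pdivrMr // in hz.
  have [a [b [c /andP[hab hg]]]] := H (- (1 - y)) (- (1 - x)) (1 - x * y).
  by move: hab hg; case: a; case: b; case: c; rewrite /gain /bR /=; nra.
Qed.

Lemma zlowE (x y : R) : ~ (x = 0 /\ y = 0) -> zlow x y = x * y / (x + y - x * y).
Proof. by move=> n; rewrite /zlow; case: ifP => // /andP[/eqP ex /eqP ey]; case: n. Qed.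

Lemma zuppE (x y : R) : ~ (x = 1 /\ y = 1) ->
  zupp x y = (x + y - 2 * x * y) / (1 - x * y).
Proof. by move=> n; rewrite /zupp; case: ifP => // /andP[/eqP ex /eqP ey]; case: n. Qed.

Lemma zlow_le_x (x y : R) : 0 <= x <= 1 -> 0 <= y <= 1 -> zlow x y <= x.
Proof.
move=> hx hy; case: (zlow_cases hx hy (lexx (zlow x y))) => [[ex [ey _]]|[d0 _]].
  by rewrite /zlow ex ey eqxx.
move: hx hy => /andP[x0 x1] /andP[y0 y1].
rewrite /zlow; case: ifP => _; first by [].
rewrite ler_pdivrMr //; nra.
Qed.

Lemma zupp_ge_x (x y : R) : 0 <= x <= 1 -> 0 <= y <= 1 -> x <= zupp x y.
Proof.
move=> hx hy; case: (zupp_cases hx hy (lexx (zupp x y))) => [[ex [ey _]]|[e0 _]].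
  by rewrite /zupp ex ey eqxx.
move: hx hy => /andP[x0 x1] /andP[y0 y1].
rewrite /zupp; case: ifP => _; first by [].
rewrite ler_pdivlMr //.
have := mulr_ge0 y0 (sqr_ge0 (1 - x)); nra.
Qed.

Lemma zlow_mono (a1 a2 x y : R) : 0 <= a1 -> a1 <= x -> x <= 1 -> 0 <= a2 -> a2 <= y -> y <= 1 ->
  ~ (a1 = 0 /\ a2 = 0) -> zlow a1 a2 <= zlow x y.
Proof.
move=> a10 a1x x1 a20 a2y y1 n.
have hx : 0 <= x <= 1 by rewrite x1 andbT (le_trans a10).
have hy : 0 <= y <= 1 by rewrite y1 andbT (le_trans a20).
have ha1 : 0 <= a1 <= 1 by rewrite a10 (le_trans a1x).
have ha2 : 0 <= a2 <= 1 by rewrite a20 (le_trans a2y).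
have nx : ~ (x = 0 /\ y = 0).
  by case=> ex ey; apply: n; split; lra.
case: (zlow_cases ha1 ha2 (lexx (zlow a1 a2))) => [[e1 [e2 _]]|[da _]]; first by case: n.
case: (zlow_cases hx hy (lexx (zlow x y))) => [[e1 [e2 _]]|[dx _]]; first by case: nx.
rewrite (zlowE n) (zlowE nx) ler_pdivrMr // mulrAC ler_pdivlMr //.
have h1 : 0 <= a1 * x * (y - a2) by rewrite !mulr_ge0 // ?subr_ge0 // (le_trans a10).
have h2 : 0 <= a2 * y * (x - a1) by rewrite !mulr_ge0 // ?subr_ge0 // (le_trans a20).
have -> : x * y * (a1 + a2 - a1 * a2) =
   a1 * a2 * (x + y - x * y) + (a1 * x * (y - a2) + a2 * y * (x - a1)) by ring.
by rewrite lerDl addr_ge0.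
Qed.

Lemma zupp_step (x b y : R) : 0 <= x -> x <= b -> b <= 1 -> 0 <= y -> y <= 1 ->
  0 < 1 - x * y -> 0 < 1 - b * y ->
  (x + y - 2 * x * y) / (1 - x * y) <= (b + y - 2 * b * y) / (1 - b * y).
Proof.
move=> x0 xb b1 y0 y1 ex eb.
rewrite ler_pdivrMr // [X in _ <= X]mulrAC ler_pdivlMr //.
have -> : (b + y - 2 * b * y) * (1 - x * y) =
  (x + y - 2 * x * y) * (1 - b * y) + (b - x) * (1 - y) ^+ 2 by ring.
by rewrite lerDl mulr_ge0 ?sqr_ge0 // subr_ge0.
Qed.

Lemma zupp_mono (b1 b2 x y : R) : 0 <= x -> x <= b1 -> b1 <= 1 -> 0 <= y -> y <= b2 -> b2 <= 1 ->
  ~ (b1 = 1 /\ b2 = 1) -> zupp x y <= zupp b1 b2.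
Proof.
move=> x0 xb1 b11 y0 yb2 b21 n.
have nb : b1 * b2 < 1.
  rewrite lt_neqAle; apply/andP; split; last by nra.
  apply/negP => /eqP h; apply: n; split; nra.
have nx : ~ (x = 1 /\ y = 1) by case=> ex ey; rewrite ex ey in xb1 yb2; nra.
rewrite (zuppE n) (zuppE nx).
apply: (le_trans (y := (b1 + y - 2 * b1 * y) / (1 - b1 * y))).
  have y1 : y <= 1 by apply: le_trans yb2 _.
  apply: zupp_step => //; nra.
have -> : b1 + y - 2 * b1 * y = y + b1 - 2 * y * b1 by ring.
have -> : b1 + b2 - 2 * b1 * b2 = b2 + b1 - 2 * b2 * b1 by ring.
rewrite (mulrC b1 y) (mulrC b1 b2).
have x1 : x <= 1 by apply: le_trans xb1 _.
apply: zupp_step => //; nra.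
Qed.

End Alg.

Definition i0 : 'I_3 := @Ordinal 3 0 isT.
Definition i1 : 'I_3 := @Ordinal 3 1 isT.
Definition i2 : 'I_3 := @Ordinal 3 2 isT.

Lemma gainE (R : realType) (Omega : Type) (A B C : Omega -> bool) (x y z : R)
  (J : {set 'I_3}) (s : 'I_3 -> R) (w : Omega) :
  \sum_(j in J) s j * @ind R Omega (tnth [tuple A; B; (fun w => A w || B w)] j) w *
     (@ind R Omega (tnth [tuple C; C; C] j) w - tnth [tuple x; y; z] j)
  = gain (s i0) (s i1) (s i2) x y z (i0 \in J) (i1 \in J) (i2 \in J) (A w) (B w) (C w).
Proof.
rewrite big_mkcond /= !big_ord_recl big_ord0 addr0 /gain.
have -> : (lift ord0 (lift ord0 ord0)) = i2 :> 'I_3 by apply: val_inj.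
have -> : (lift ord0 ord0) = i1 :> 'I_3 by apply: val_inj.
have -> : (ord0 : 'I_3) = i0 by apply: val_inj.
by rewrite addrA.
Qed.

Lemma ordJ (J : {set 'I_3}) : J != set0 -> [|| i0 \in J, i1 \in J | i2 \in J].
Proof.
case/set0Pn => j; case: j => [[|[|[|k]]] hk] hj //.
- have -> : i0 = Ordinal hk by apply: val_inj.
  by rewrite hj ?orbT.
- have -> : i1 = Ordinal hk by apply: val_inj.
  by rewrite hj ?orbT.
- have -> : i2 = Ordinal hk by apply: val_inj.
  by rewrite hj ?orbT.
Qed.

Lemma exH (Omega : Type) (A B : Omega -> bool) (J : {set 'I_3}) (w : Omega) :
  [exists j in J, tnth [tuple A; B; (fun w => A w || B w)] j w] -> A w || B w.
Proof.
case/existsP => j /andP[_]; case: j => [[|[|[|k]]] hk] //=.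
- by rewrite /tnth /= => ->.
- by rewrite /tnth /= => ->; rewrite orbT.
Qed.

Lemma exH2 (Omega : Type) (A B : Omega -> bool) (J : {set 'I_3}) (w : Omega) :
  [|| (i0 \in J) && A w, (i1 \in J) && B w | (i2 \in J) && (A w || B w)] ->
  [exists j in J, tnth [tuple A; B; (fun w => A w || B w)] j w].
Proof.
case/or3P => /andP[hj hw]; apply/existsP.
- by exists i0; rewrite hj.
- by exists i1; rewrite hj.
- by exists i2; rewrite hj.
Qed.

Lemma coh_iff (R : realType) (Omega : Type) (A B C : Omega -> bool) (x y z : R) :
  logically_independent A B C -> 0 <= x <= 1 -> 0 <= y <= 1 ->
  (coherent_CA_CB_CAB A B C x y z <-> zlow x y <= z <= zupp x y).
Proof.
move=> Hind hx hy; split.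
- move=> Hc; apply: nec => // s0 s1 s2.
  have hT : [set: 'I_3] != set0 by apply/set0Pn; exists i0; rewrite inE.
  have [w [hw hg]] := Hc [set: 'I_3] hT (fun j => tnth [tuple s0; s1; s2] j).
  rewrite gainE !inE in hg.
  exists (A w), (B w), (C w); apply/andP; split; first exact: exH hw.
  exact: hg.
- move=> hz J HJ s.
  have ht : (i0 \in J) || (i1 \in J) || (i2 \in J) by rewrite -orbA; exact: ordJ.
  have [a [b [c /andP[hin hg]]]] := core (s i0) (s i1) (s i2) hx hy hz ht.
  have [w [ea eb ec]] := Hind a b c.
  exists w; split; last by rewrite gainE ea eb ec.
  by apply: exH2; rewrite ea eb orbA.
Qed.

Theorem mainTheorem2 (R : realType) (Omega : Type) (A B C : Omega -> bool) :
  logically_independent A B C ->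
  (forall x y z : R, 0 <= x <= 1 -> 0 <= y <= 1 ->
     (coherent_CA_CB_CAB A B C x y z <-> zlow x y <= z <= zupp x y))
  /\
  (forall a1 b1 a2 b2 : R,
     0 <= a1 -> a1 <= b1 -> b1 <= 1 ->
     0 <= a2 -> a2 <= b2 -> b2 <= 1 ->
     ~ (a1 = 0 /\ a2 = 0) -> ~ (b1 = 1 /\ b2 = 1) ->
     forall z : R,
       (exists x y : R, [/\ a1 <= x <= b1, a2 <= y <= b2 &
                           coherent_CA_CB_CAB A B C x y z]) <->
       a1 * a2 / (a1 + a2 - a1 * a2) <= z <=
       (b1 + b2 - 2 * b1 * b2) / (1 - b1 * b2)).
Proof.
move=> Hind; split; first by move=> x y z hx hy; exact: coh_iff.
move=> a1 b1 a2 b2 a10 ab1 b11 a20 ab2 b21 na nb z.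
rewrite -(zlowE na) -(zuppE nb).
have ha1 : 0 <= a1 <= 1 by rewrite a10 (le_trans ab1).
have ha2 : 0 <= a2 <= 1 by rewrite a20 (le_trans ab2).
have hb1 : 0 <= b1 <= 1 by rewrite b11 andbT (le_trans a10).
have hb2 : 0 <= b2 <= 1 by rewrite b21 andbT (le_trans a20).
split.
- case=> x [y [/andP[ax xb] /andP[ay yb] hc]].
  have hx : 0 <= x <= 1 by rewrite (le_trans a10) // (le_trans xb).
  have hy : 0 <= y <= 1 by rewrite (le_trans a20) // (le_trans yb).
  have /andP[h1 h2] := (coh_iff z Hind hx hy).1 hc.
  apply/andP; split.
    by apply: le_trans h1; apply: zlow_mono => //; [exact: le_trans xb _ | exact: le_trans yb _].
  apply: le_trans h2 _; apply: zupp_mono => //.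
    by case/andP: hx.
  by case/andP: hy.
- move=> /andP[hzl hzu].
  case: (lerP z (zupp a1 a2)) => h1.
    exists a1, a2; split; rewrite ?lexx ?ab1 ?ab2 //.
    by apply/(coh_iff z Hind ha1 ha2); rewrite hzl h1.
  case: (lerP (zlow b1 b2) z) => h2.
    exists b1, b2; split; rewrite ?lexx ?ab1 ?ab2 //.
    by apply/(coh_iff z Hind hb1 hb2); rewrite hzu h2.
  have za1 : a1 <= z := le_trans (zupp_ge_x ha1 ha2) (ltW h1).
  have zb1 : z <= b1 := le_trans (ltW h2) (zlow_le_x hb1 hb2).
  have hz : 0 <= z <= 1 by rewrite (le_trans a10) // (le_trans zb1).
  exists z, a2; split; rewrite ?za1 ?zb1 ?lexx ?ab2 //.
  by apply/(coh_iff z Hind hz ha2); rewrite zlow_le_x ?zupp_ge_x.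
Qed.
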